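(* Fix an integer $d\geq 2$, let $f_n$ be a sequence with $f_n\to\infty$, and set $r_n=f_n\left(\frac{\log n}{n}\right)^{1/d}$. Let $\mathcal{G}_n=\mathcal{G}(\mathcal{X}_n;r_n)$. Let $q,q'\in[0,1]^d$ satisfy $q\preceq_\delta q'$ for some $\delta>0$ independent of $n$. Then almost surely there exist $X,X'\in\mathcal{X}_n$ such that (i) $\|X-q\|_2\leq r_n/2$ and $\|X'-q'\|_2\leq r_n/2$; (ii) $q\preceq X$ and $X'\preceq q'$; (iii) $X$ and $X'$ are connected in $\mathcal{G}_n$ by a monotone path.
   Context: Logarithms are natural. For $p=(p_1,\dots,p_d),p'=(p'_1,\dots,p'_d)\in\mathbb{R}^d$, $p\preceq p'$ means $p_i\leq p'_i$ for all $i$; for $\delta>0$, $p\preceq_\delta p'$ means $p\preceq p'$ and $\min_i(p'_i-p_i)=\delta$. $\mathcal{X}_n$ consists of $n$ points drawn independently and uniformly at random from $[0,1]^d$. $\mathcal{G}(V;r)$ is the directed graph with vertex set $V$ and edges $(x,y)$ for all $x\neq y\in V$ with $\|x-y\|_2\leq r$. A path in this graph is monotone if every traversed edge $(x,y)$ satisfies $x\preceq y$. An event holds almost surely (a.s.) if its probability tends to $1$ as $n\to\infty$. *)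

(* Defs.v *)
From HB Require Import structures.
From mathcomp Require Import all_boot all_order all_algebra.
From mathcomp Require Import all_classical all_reals all_analysis.
Set Implicit Arguments. Unset Strict Implicit. Unset Printing Implicit Defensive.
Import Order.TTheory GRing.Theory Num.Theory.
Local Open Scope classical_set_scope.
Local Open Scope ring_scope.

Definition pt (R : realType) (d : nat) := 'I_d -> R.

Definition ple (R : realType) (d : nat) (p p' : 'I_d -> R) : Prop :=
  forall i, p i <= p' i.

Definition ple_delta (R : realType) (d : nat) (delta : R) (p p' : 'I_d -> R) : Prop :=
  ple p p' /\ (forall i, delta <= p' i - p i) /\ (exists i, p' i - p i = delta).

Definition dist2 (R : realType) (d : nat) (x y : 'I_d -> R) : R :=
  Num.sqrt (\sum_(i < d) (x i - y i) ^+ 2).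

Definition mono_edge (R : realType) (d : nat) (r : R) (x y : 'I_d -> R) : Prop :=
  x <> y /\ dist2 x y <= r /\ ple x y.

Definition mono_path (R : realType) (d : nat) (V : set ('I_d -> R)) (r : R)
    (x y : 'I_d -> R) : Prop :=
  exists s : seq ('I_d -> R),
    V x /\ (forall z, z \in s -> V z) /\
    (forall k, (k < size s)%N ->
       mono_edge r (nth x (x :: s) k) (nth x s k)) /\
    last x s = y.

Definition inbox (R : realType) (d : nat) (a b x : 'I_d -> R) : Prop :=
  forall j, a j <= x j <= b j.

Definition boxvol (R : realType) (d : nat) (a b : 'I_d -> R) : R :=
  \prod_(j < d) Num.max 0 (Num.min (b j) 1 - Num.max (a j) 0).

(* X : nat -> T -> R^d is an i.i.d. sequence of uniform points in [0,1]^d: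
   measurable coordinates, and for every finite family of distinct indices and
   closed boxes, P(all X_i in B_i) = prod_i Leb(B_i ∩ [0,1]^d).  (Closed boxes form
   a pi-system generating the Borel sets, so this pins down the joint law.) *)
Definition iid_uniform (R : realType) (dd : measure_display) (T : measurableType dd)
    (P : probability T R) (d : nat) (X : nat -> T -> 'I_d -> R) : Prop :=
  (forall i j, measurable_fun setT (fun w => X i w j)) /\
  (forall (S : seq nat) (a b : nat -> 'I_d -> R), uniq S ->
     P (\bigcap_(i in [set` S]) [set w | inbox (a i) (b i) (X i w)]) =
     ((\prod_(i <- S) boxvol (a i) (b i))%R)%:E).

Definition sample (R : realType) (T : Type) (d : nat) (X : nat -> T -> 'I_d -> R)
    (n : nat) (w : T) : set ('I_d -> R) :=
  [set x | exists i, (i < n)%N /\ X i w = x].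

Definition radius (R : realType) (d : nat) (f : nat -> R) (n : nat) : R :=
  f n * powR (ln (n%:R) / n%:R) (d%:R)^-1.

Definition good_event (R : realType) (T : Type) (d : nat) (X : nat -> T -> 'I_d -> R)
    (f : nat -> R) (q q' : 'I_d -> R) (n : nat) : set T :=
  [set w | exists x x',
     sample X n w x /\ sample X n w x' /\
     dist2 x q <= radius d f n / 2 /\ dist2 x' q' <= radius d f n / 2 /\
     ple q x /\ ple x' q' /\
     mono_path (sample X n w) (radius d f n) x x'].

(* Main.v *)
Require Import Defs.
From HB Require Import structures.
From mathcomp Require Import all_boot all_order all_algebra.
From mathcomp Require Import all_classical all_reals all_analysis.
From mathcomp Require Import ring lra.
Import Order.TTheory GRing.Theory Num.Theory.
Local Open Scope classical_set_scope.
Local Open Scope ring_scope.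
Set Implicit Arguments. Unset Strict Implicit. Unset Printing Implicit Defensive.
Definition Ebox (R : realType) (T : Type) (d : nat) (X : nat -> T -> 'I_d -> R)
  (i : nat) (a b : 'I_d -> R) : set T := [set w | inbox a b (X i w)].

Lemma Ebox_meas (R : realType) (dd : measure_display) (T : measurableType dd)
  (d : nat) (X : nat -> T -> 'I_d -> R) :
  (forall i j, measurable_fun setT (fun w => X i w j)) ->
  forall i a b, measurable (Ebox X i a b).
Proof.
move=> hX i a b.
have -> : Ebox X i a b = \bigcap_(j in [set: 'I_d])
     ((fun w => X i w j) @^-1` `[a j, b j]).
  apply/seteqP; split => w /=.
    by move=> h j _ /=; rewrite in_itv /=; exact: h.
  by move=> h j; have := h j I; rewrite /= in_itv.
apply: fin_bigcap_measurable.
  exact: finite_finset.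
move=> j _; rewrite -(setTI (_ @^-1` _)).
exact: (hX i j).
Qed.

Lemma set_seq_cons (T : eqType) (j : T) (U : seq T) :
  [set` (j :: U)] = j |` [set` U].
Proof.
apply/seteqP; split => x /=; rewrite inE.
  by case/orP => [/eqP ->|h]; [left|right].
by case=> [->|h]; rewrite ?eqxx ?h ?orbT.
Qed.

Lemma bigcap_seq_meas (R : realType) (dd : measure_display) (T : measurableType dd)
  (d : nat) (X : nat -> T -> 'I_d -> R) (F : nat -> set T) (S : seq nat) :
  (forall i, measurable (F i)) -> measurable (\bigcap_(i in [set` S]) F i).
Proof.
move=> hF; apply: fin_bigcap_measurable; first exact: finite_seq.
by move=> i _; exact: hF.
Qed.

Lemma co_prod (R : realType) (dd : measure_display) (T : measurableType dd)
  (P : probability T R) (d : nat) (X : nat -> T -> 'I_d -> R) :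
  (forall i j, measurable_fun setT (fun w => X i w j)) ->
  (forall (S : seq nat) (a b : nat -> 'I_d -> R), uniq S ->
     P (\bigcap_(i in [set` S]) [set w | inbox (a i) (b i) (X i w)]) =
     ((\prod_(i <- S) boxvol (a i) (b i))%R)%:E) ->
  forall (a b : nat -> 'I_d -> R) (U S : seq nat), uniq (S ++ U) ->
  P (\bigcap_(i in [set` S]) Ebox X i (a i) (b i) `&`
     \bigcap_(j in [set` U]) ~` Ebox X j (a j) (b j)) =
  ((\prod_(i <- S) boxvol (a i) (b i)) * \prod_(j <- U) (1 - boxvol (a j) (b j)))%:E.
Proof.
move=> hX hind a b U; elim: U => [|j U IH] S huq.
  rewrite big_nil mulr1.
  have -> : [set` [::]] = @set0 nat by apply/seteqP; split.
  by rewrite bigcap_set0 setIT hind // -(cats0 S).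
have mE : forall i, measurable (Ebox X i (a i) (b i)) by move=> i; exact: Ebox_meas.
have mA : forall S' : seq nat, measurable (\bigcap_(i in [set` S']) Ebox X i (a i) (b i)).
  move=> S'.  apply: fin_bigcap_measurable; [exact: finite_seq|move=> i _; exact: mE].
have mC : forall U' : seq nat, measurable (\bigcap_(i in [set` U']) ~` Ebox X i (a i) (b i)).
  by move=> U'; apply: fin_bigcap_measurable; [exact: finite_seq|move=> i _; apply: measurableC; exact: mE].
rewrite set_seq_cons bigcap_setU1.
set A := \bigcap_(i in [set` S]) _.
set C := \bigcap_(i in [set` U]) _.
have -> : A `&` (~` Ebox X j (a j) (b j) `&` C) = (A `&` C) `\` Ebox X j (a j) (b j).
  apply/seteqP; split => w.
    by case=> hA [hE hC]; split; [split|].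
  by case=> [[hA hC] hE]; split; [|split].
have mAC : measurable (A `&` C) by apply: measurableI; [exact: mA|exact: mC].
rewrite measureD //; last first.
  by rewrite (le_lt_trans (probability_le1 _ _)) ?ltry.
have -> : A `&` C `&` Ebox X j (a j) (b j) =
   \bigcap_(i in [set` (j :: S)]) Ebox X i (a i) (b i) `&` C.
  rewrite set_seq_cons bigcap_setU1; apply/seteqP; split => w.
    by case=> [[hA hC] hE].
  by case=> [[hE hA] hC].
have u1 : uniq (S ++ U).
  exact: subseq_uniq (cat_subseq (subseq_refl S) (subseq_cons U j)) huq.
have u2 : uniq ((j :: S) ++ U).
  have hp : perm_eq ([:: j] ++ S ++ U) (S ++ [:: j] ++ U) by rewrite perm_catCA.
  by have := perm_uniq hp; move=> /= ->.
have e1 : P (A `&` C) = _ := IH S u1.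
have e2 : P (\bigcap_(i in [set` j :: S]) Ebox X i (a i) (b i) `&` C) = _ := IH (j :: S) u2.
transitivity (((\prod_(i <- S) boxvol (a i) (b i)) * \prod_(j <- U) (1 - boxvol (a j) (b j)))%:E -
  ((\prod_(i <- j :: S) boxvol (a i) (b i)) * \prod_(j <- U) (1 - boxvol (a j) (b j)))%:E)%E.
  by rewrite -e1 -e2.
rewrite -EFinB; congr (_%:E).
rewrite big_cons big_cons; ring.
Qed.
Lemma dist2_le (R : realType) (d : nat) (x y : 'I_d -> R) (t : R) :
  0 <= t -> (forall j, `|x j - y j| <= t) -> dist2 x y <= d%:R * t.
Proof.
move=> t0 h; rewrite /dist2.
have hdt : 0 <= d%:R * t by apply: mulr_ge0.
rewrite -(ger0_norm hdt) -sqrtr_sqr; apply: ler_wsqrtr.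
apply: (le_trans (y := \sum_(i < d) t ^+ 2)).
  apply: ler_sum => i _; rewrite -real_normK ?num_real //.
  by rewrite lerXn2r ?nnegrE.
rewrite sumr_const card_ord exprMn -mulr_natl mulr1 -[t ^+ 2 *+ d]mulr_natl.
apply: ler_wpM2r; first exact: sqr_ge0.
rewrite -natrX ler_nat; case: d {x y h hdt} => // n.
by rewrite expnS leq_pmulr // expn_gt0.
Qed.
Lemma union_bound (R : realType) (dd : measure_display) (T : measurableType dd)
  (P : probability T R) (F : nat -> set T) (m : nat) :
  (forall k, measurable (F k)) ->
  measurable (\big[setU/set0]_(k < m) F k) /\
  (P (\big[setU/set0]_(k < m) F k) <= \sum_(k < m) P (F k))%E.
Proof.
move=> hF; elim: m => [|m [IHm IHp]].
  by rewrite !big_ord0 measure0; split.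
rewrite !big_ord_recr /=; split; first exact: measurableU.
apply: le_trans (measureU2 _ IHm (hF m)) _.
by apply: leeD.
Qed.
Lemma arith1 (R : realFieldType) (dl s K r dn a : R) :
 0 < dl -> dl <= 1 -> 0 < s -> 8 * s <= dl -> 4 * dn * s <= r * dl -> 1 <= dn ->
 dl < 2 * s * K -> 2 * s * K <= dl + 2 * s -> 0 < K -> dl - s <= a -> a <= 1 ->
 s < a / K /\ dn * (a / K + s) <= r.
Proof.
move=> dl0 dl1 s0 h8 h4 dn1 hK1 hK2 K0 ha1 ha2.
set w := a / K.
have hw : w * K = a by rewrite /w mulfVK // gt_eqF.
have r0 : 0 <= r.
  have : 0 < dn * s by nra.
  nra.
split.
  rewrite -/w ltNge; apply/negP => hws.
  have e : s * K - w * K = (s - w) * K by ring.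
  have : 0 <= (s - w) * K by apply: mulr_ge0; lra.
  nra.
have w0 : 0 <= w by rewrite /w divr_ge0 //; lra.
have h1 : w * dl <= 2 * s.
  have e : (s * K) * w = s * a by rewrite -hw; ring.
  nra.
have h2 : (dn * w) * dl <= 2 * (dn * s).
  have e : (dn * w) * dl = dn * (w * dl) by ring.
  rewrite e; nra.
have h3 : dn * w <= r / 2.
  have e : 4 * dn * s = 4 * (dn * s) by ring.
  rewrite e in h4; nra.
have h5 : dn * s <= r / 4.
  have e : 4 * dn * s = 4 * (dn * s) by ring.
  rewrite e in h4; nra.
lra.
Qed.

Lemma main_n (R : realType) (dd : measure_display) (T : measurableType dd)
  (P : probability T R) (d : nat) (X : nat -> T -> 'I_d -> R)
  (f : nat -> R) (q q' : 'I_d -> R) (delta : R) :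
  (2 <= d)%N ->
  (forall i j, measurable_fun setT (fun w => X i w j)) ->
  (forall (S : seq nat) (a b : nat -> 'I_d -> R), uniq S ->
     P (\bigcap_(i in [set` S]) [set w | inbox (a i) (b i) (X i w)]) =
     ((\prod_(i <- S) boxvol (a i) (b i))%R)%:E) ->
  (forall i, 0 <= q i <= 1) -> (forall i, 0 <= q' i <= 1) ->
  0 < delta -> ple_delta delta q q' ->
  forall (n : nat) (s : R), 0 < s -> 8 * s <= delta ->
  4 * d%:R * s <= Defs.radius d f n * delta ->
  exists G : set T, measurable G /\ G `<=` good_event X f q q' n /\
     ((1 - (delta / (2 * s) + 2) * (1 - s ^+ d) ^+ n)%:E <= P G)%E.
Proof.
move=> d2 hX hind hq hq' del0 [hle [hD [j1 hj1]]] n s s0 h8 h4.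
set r := Defs.radius d f n.
have d0 : (0 < d)%N by apply: leq_trans d2.
have dn1 : 1 <= d%:R :> R by rewrite ler1n.
have del1 : delta <= 1.
  by rewrite -hj1; case/andP: (hq j1) => ? ?; case/andP: (hq' j1) => ? ?; lra.
have r0 : 0 <= r.
  rewrite -(pmulr_lge0 _ del0); apply: le_trans h4.
  by rewrite !mulr_ge0 // ?ltW // ler0n.
have hxs0 : 0 <= delta / (2 * s) by apply: divr_ge0; lra.
set K := (Num.truncn (delta / (2 * s))).+1.
have hK1 : delta / (2 * s) < K%:R by exact: truncnS_gt.
have hK2 : K%:R <= delta / (2 * s) + 1.
  by rewrite /K -addn1 natrD lerD2r truncn_le.
have K0 : 0 < K%:R :> R by rewrite ltr0n.
have hK1' : delta < 2 * s * K%:R.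
  by move: hK1; rewrite ltr_pdivrMr ?mulr_gt0 // mulrC.
have hK2' : 2 * s * K%:R <= delta + 2 * s.
  have s2 : 0 <= 2 * s by lra.
  have := ler_wpM2r s2 hK2.
  have e : (delta / (2 * s) + 1) * (2 * s) = delta + 2 * s.
    by field; apply/eqP; lra.
  rewrite e; nra.
pose L (k : nat) (j : 'I_d) := q j + k%:R / K%:R * (q' j - q j - s).
pose U (k : nat) (j : 'I_d) := L k j + s.
have hck : forall k, (k <= K)%N -> 0 <= (k%:R / K%:R : R) <= 1.
  move=> k hk; apply/andP; split; first by rewrite divr_ge0 // ltW.
  by rewrite ler_pdivrMr // mul1r ler_nat.
have ha : forall j, delta - s <= q' j - q j - s /\ q' j - q j - s <= 1.
  move=> j; have := hD j; case/andP: (hq j) => ? ?; case/andP: (hq' j) => ? ?.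
  by move=> ?; split; lra.
have hL0 : forall k j, (k <= K)%N -> 0 <= L k j.
  move=> k j hk; case/andP: (hck k hk) => c0 c1; have [ha1 ha2] := ha j.
  case/andP: (hq j) => ? ?; rewrite /L; nra.
have hU1 : forall k j, (k <= K)%N -> U k j <= 1.
  move=> k j hk; case/andP: (hck k hk) => c0 c1; have [ha1 ha2] := ha j.
  case/andP: (hq' j) => ? ?; rewrite /U /L; nra.
have hvol : forall k, (k <= K)%N -> boxvol (L k) (U k) = s ^+ d.
  move=> k hk; rewrite /boxvol (eq_bigr (fun _ => s)) ?prodr_const ?card_ord //.
  move=> j _; rewrite min_l ?hU1 // (@max_l _ _ (L k j) 0) ?hL0 //.
  by rewrite /U addrAC subrr add0r max_r // ltW.
pose F (k : nat) := \bigcap_(i in [set` iota 0 n]) ~` Ebox X i (L k) (U k).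
have mF : forall k, measurable (F k).
  move=> k; apply: fin_bigcap_measurable; first exact: finite_seq.
  by move=> i _; apply: measurableC; exact: Ebox_meas.
have PF : forall k, (k <= K)%N -> P (F k) = ((1 - s ^+ d) ^+ n)%:E.
  move=> k hk.
  have := co_prod hX hind (fun _ => L k) (fun _ => U k) (U := iota 0 n) (S := [::]) (iota_uniq 0 n).
  have -> : [set` [::]] = @set0 nat by apply/seteqP; split.
  rewrite bigcap_set0 setTI big_nil mul1r hvol //.
  have e : \prod_(j <- iota 0 n) (1 - s ^+ d) = (1 - s ^+ d) ^+ n.
    by rewrite (_ : iota 0 n = index_iota 0 n) ?prodr_const_nat ?subn0 // /index_iota subn0.
  by rewrite e => <-.
pose Bad := \big[setU/set0]_(k < K.+1) F k.
have [mBad PBad] := union_bound P K.+1 mF.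
exists (setC Bad); split; first exact: measurableC mBad.
split; last first.
  rewrite probability_setC //.
  have hsum : (\sum_(k < K.+1) P (F k) = (K.+1%:R * (1 - s ^+ d) ^+ n)%:E)%E.
    rewrite (eq_bigr (fun _ => ((1 - s ^+ d) ^+ n)%:E)); last first.
      by move=> k _; rewrite PF // -ltnS.
    by rewrite sumEFin sumr_const card_ord mulr_natl.
  rewrite hsum in PBad.
  have fin : P Bad \is a fin_num.
    by rewrite ge0_fin_numE ?measure_ge0 // (le_lt_trans (probability_le1 _ mBad)) ?ltry.
  move: PBad; rewrite -(fineK fin) lee_fin -EFinB lee_fin => PBad.
  rewrite lerD2l lerN2; apply: le_trans PBad _.
  apply: ler_wpM2r.
    apply: exprn_ge0; rewrite subr_ge0; apply: exprn_ile1; lra.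
  by rewrite -addn1 natrD; lra.
move=> w hw.
have ex : forall k, (k <= K)%N -> exists i, (i < n)%N /\ inbox (L k) (U k) (X i w).
  move=> k hk; apply: contra_notP hw => hne.
  rewrite /Bad -bigcup_mkord; exists k; first by [].
  move=> i /= hi hE; apply: hne; exists i; split => //.
  by move: hi; rewrite mem_iota add0n.
have ex2 : forall k : nat, exists x : 'I_d -> R,
    (k <= K)%N -> sample X n w x /\ inbox (L k) (U k) x.
  move=> k; case: (leqP k K) => hk.
    by case: (ex k hk) => i [hi hin]; exists (X i w) => _; split => //; exists i.
  by exists q.
case: (choice ex2) => xs hxs.
have hLS : forall k j, L k.+1 j = L k j + (q' j - q j - s) / K%:R.
  by move=> k j; rewrite /L -addn1 natrD; ring.
have edge : forall k, (k < K)%N -> mono_edge r (xs k) (xs k.+1).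
  move=> k hk.
  have [_ hin1] := hxs k (ltnW hk).
  have [_ hin2] := hxs k.+1 hk.
  have key : forall j, U k j < L k.+1 j /\ U k.+1 j - L k j <= r / d%:R.
    move=> j; have [ha1 ha2] := ha j.
    have [h1 h2] := arith1 del0 del1 s0 h8 h4 dn1 hK1' hK2' K0 ha1 ha2.
    rewrite /U !hLS; split; first by lra.
    have e : L k j + (q' j - q j - s) / K%:R + s - L k j = (q' j - q j - s) / K%:R + s.
      by ring.
    by rewrite e ler_pdivlMr ?(lt_le_trans ltr01) // mulrC.
  have dR : 0 < d%:R :> R by rewrite ltr0n.
  have bnd : forall j, xs k j <= U k j /\ L k j <= xs k j /\
                       xs k.+1 j <= U k.+1 j /\ L k.+1 j <= xs k.+1 j.
    move=> j; case/andP: (hin1 j) => ? ?; case/andP: (hin2 j) => ? ?; by [].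
  split.
    move=> e; pose j0 := Ordinal d0.
    have [k1 _] := key j0; have [b1 [_ [_ b4]]] := bnd j0.
    by move: b4; rewrite -e; lra.
  split.
    apply: le_trans (dist2_le (t := r / d%:R) _ _) _.
    - by rewrite divr_ge0 // ltW.
    - move=> j; have [k1 k2] := key j; have [b1 [b2 [b3 b4]]] := bnd j.
      rewrite ler_norml; apply/andP; split; lra.
    - by rewrite mulrC divfK // gt_eqF.
  move=> j; have [k1 k2] := key j; have [b1 [b2 [b3 b4]]] := bnd j; lra.
have hL0q : forall j, L 0 j = q j by move=> j; rewrite /L mul0r mul0r addr0.
have hUKq : forall j, U K j = q' j.
  by move=> j; rewrite /U /L divff ?gt_eqF // mul1r; ring.
have [smp0 in0] := hxs 0%N (leq0n K).
have [smpK inK] := hxs K (leqnn K).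
have dR : 0 < d%:R :> R by rewrite ltr0n.
have hds : d%:R * s <= r / 2.
  have aux : forall r' : R, 0 <= r' -> 4 * d%:R * s <= r' * delta -> d%:R * s <= r' / 2.
    by move=> r' ? ?; nra.
  exact: aux.
exists (xs 0%N), (xs K).
split; first exact: smp0.
split; first exact: smpK.
split.
  apply: le_trans (dist2_le (t := s) _ _) hds; first exact: ltW.
  move=> j; case/andP: (in0 j); rewrite /U hL0q => ? ?.
  by rewrite ler_norml; apply/andP; split; lra.
split.
  apply: le_trans (dist2_le (t := s) _ _) hds; first exact: ltW.
  move=> j; case/andP: (inK j); rewrite hUKq /U => ? ?.
  rewrite ler_norml; apply/andP; split; last by lra.
  have := hUKq j; rewrite /U => ?; lra.
split.
  by move=> j; case/andP: (in0 j); rewrite hL0q.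
split.
  by move=> j; case/andP: (inK j); rewrite hUKq.
have emap : xs 0%N :: map xs (iota 1 K) = map xs (iota 0 K.+1) by [].
exists (map xs (iota 1 K)).
split; first exact: smp0.
split.
  move=> z /mapP [k hk ->]; move: hk; rewrite mem_iota add1n ltnS => /andP [_ hk].
  by have [] := hxs k hk.
split.
  move=> k; rewrite size_map size_iota => hk.
  have hk' : (k < K.+1)%N by rewrite ltnS ltnW.
  rewrite emap (nth_map 0%N) ?size_iota // nth_iota //.
  rewrite (nth_map 0%N) ?size_iota // nth_iota // add1n.
  exact: edge.
rewrite (last_nth (xs 0%N)) size_map size_iota emap (nth_map 0%N) ?size_iota //.
by rewrite nth_iota.
Qed.
Lemma ln_ge1 (R : realType) (n : nat) : (4 <= n)%N -> 1 <= ln (n%:R : R).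
Proof.
move=> hn.
set y := expR (1 / 2 : R).
have y0 : 0 < y by exact: expR_gt0.
have hy : y * y^-1 = 1 by rewrite mulfV // gt_eqF.
have h1 : 1 - 1 / 2 <= y^-1 by rewrite /y -expRN; exact: expR_ge1Dx.
have h2 : y <= 2 by nra.
have h3 : expR (1 : R) <= 4.
  have -> : (1 : R) = 1 / 2 + 1 / 2 by field.
  by rewrite expRD -/y; nra.
rewrite -[leLHS](expRK 1) ler_ln ?posrE ?expR_gt0 ?ltr0n ?(leq_trans _ hn) //.
apply: le_trans h3 _.
by rewrite (ler_nat R 4 n).
Qed.

Lemma ln_small (R : realType) (eps : R) : 0 < eps ->
  exists N, forall n, (N <= n)%N -> ln (n%:R : R) <= eps * n%:R.
Proof.
move=> e0; exists (Num.truncn ((2 / eps) ^+ 2)).+1 => n hn.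
have hx0 : 0 <= (2 / eps) ^+ 2 by exact: sqr_ge0.
have hn' : (2 / eps) ^+ 2 < n%:R.
  apply: lt_le_trans (truncnS_gt _) _; by rewrite ler_nat.
have n0 : 0 < n%:R :> R by apply: le_lt_trans hn'.
set sq := Num.sqrt (n%:R : R).
have sq0 : 0 < sq by rewrite sqrtr_gt0.
have sq2 : sq ^+ 2 = n%:R by rewrite sqr_sqrtr // ltW.
have hsq : 2 / eps <= sq.
  rewrite -(ler_pXn2r (isT : (0 < 2)%N)) ?nnegrE ?divr_ge0 ?ltW // sq2.
  exact: hn'.
have hsq' : 2 <= sq * eps by rewrite -ler_pdivrMr.
have hl : ln (n%:R : R) <= 2 * sq.
  rewrite -sq2 lnXn // mulr2n mulr2n; have := ln_sublinear sq0; lra.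
nra.
Qed.

Lemma bound_n (R : realType) (d n : nat) (delta tau : R) :
  (2 <= d)%N -> (4 <= n)%N -> 0 < delta -> delta <= 1 -> 0 < tau ->
  tau ^+ d = ln (n%:R : R) / n%:R -> 16 * tau <= delta ->
  (delta / (2 * (2 * tau)) + 2) * (1 - (2 * tau) ^+ d) ^+ n <= 3 / n%:R.
Proof.
move=> d2 n4 del0 del1 t0 htd h16.
set m : R := n%:R.
have m0 : 0 < m by rewrite ltr0n (leq_trans _ n4).
set v := m^-1.
have mv : m * v = 1 by rewrite mulfV // gt_eqF.
have v0 : 0 < v by rewrite invr_gt0.
have m4 : 4 <= m by rewrite /m (ler_nat R 4 n).
have v4 : v <= 4^-1 by rewrite /v lef_pV2 ?posrE //; lra.
have hln := ln_ge1 R n4.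
have hx : v <= tau ^+ d by rewrite htd /v -[leLHS]mul1r ler_wpM2r // ltW.
have d1 : (0 < d)%N by apply: leq_trans d2.
have hvd : v ^+ d <= v.
  case: d d1 {htd hx d2} => // d' _; rewrite exprS.
  have : v ^+ d' <= 1 by apply: exprn_ile1; lra.
  nra.
have htv : v <= tau.
  rewrite leNgt; apply/negP => h.
  have := ltrXn2r d (ltW t0) h; rewrite -lt0n d1 => H.
  have := le_trans hvd hx; lra.
set s := 2 * tau.
have s1 : s <= 1 by rewrite /s; lra.
have s0 : 0 < s by rewrite /s; lra.
have hsd : 2 * (ln m / m) <= s ^+ d.
  rewrite /s exprMn -htd; apply: ler_wpM2r; first by apply: exprn_ge0; lra.
  case: d d1 {htd hx d2 hvd htv} => // d' _; rewrite exprS.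
  have : (1 : R) <= 2 ^+ d' by apply: exprn_ege1; lra.
  lra.
have hB : (1 - s ^+ d) ^+ n <= v ^+ 2.
  have sd1 : s ^+ d <= 1 by apply: exprn_ile1; lra.
  apply: (@le_trans _ _ (expR (- s ^+ d) ^+ n)).
    apply: lerXn2r; rewrite ?nnegrE ?expR_ge0 ?subr_ge0 //.
    exact: expR_ge1Dx.
  rewrite -expRM_natr.
  apply: (@le_trans _ _ (expR (- (2%:R * ln m)))).
    rewrite ler_expR.
    have : ln m = (ln m / m) * m by rewrite divfK // gt_eqF.
    nra.
  rewrite expRN expRM_natl lnK ?posrE // /v exprVn.
by [].
have hA : delta / (2 * s) + 2 <= m / 4 + 2.
  have hw : tau^-1 <= m.
    by rewrite -[m]invrK lef_pV2 ?posrE ?invr_gt0.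
  have e : delta / (2 * s) = delta * tau^-1 / 4 by rewrite /s; field; apply/eqP; lra.
  rewrite e lerD2r ler_pM2r //; have : 0 < tau^-1 by rewrite invr_gt0.
  nra.
have A0 : 0 <= delta / (2 * s) + 2 by rewrite addr_ge0 // divr_ge0 ?ltW //; lra.
have B0 : 0 <= (1 - s ^+ d) ^+ n.
  by apply: exprn_ge0; rewrite subr_ge0; apply: exprn_ile1; lra.
apply: (@le_trans _ _ ((m / 4 + 2) * v ^+ 2)).
  apply: le_trans (ler_wpM2l A0 hB) _.
  by apply: ler_wpM2r; [exact: exprn_ge0 (ltW v0) | exact: hA].
rewrite -/v; nra.
Qed.

Unset Implicit Arguments.

Theorem lemma7 (R : realType) (dd : measure_display) (T : measurableType dd)
    (P : probability T R) (d : nat) (X : nat -> T -> 'I_d -> R)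
    (f : nat -> R) (q q' : 'I_d -> R) (delta : R) :
  (2 <= d)%N ->
  iid_uniform P X ->
  f @ \oo --> +oo ->
  (forall i, 0 <= q i <= 1) -> (forall i, 0 <= q' i <= 1) ->
  0 < delta -> ple_delta delta q q' ->
  exists A : nat -> set T,
    (forall n, measurable (A n) /\ A n `<=` good_event X f q q' n) /\
    (P (A n) @[n --> \oo] --> 1%E).
Proof.
move=> d2 [hX hind] hf hq hq' del0 hpd.
have del1 : delta <= 1.
  case: hpd => _ [_ [j1 hj1]]; rewrite -hj1.
  by case/andP: (hq j1) => ? ?; case/andP: (hq' j1) => ? ?; lra.
have d1 : (0 < d)%N by apply: leq_trans d2.
set eps := (delta / 16) ^+ d.
have eps0 : 0 < eps by apply: exprn_gt0; lra.
pose cond (n : nat) := [/\ (4 <= n)%N, 8 * d%:R / delta <= f n &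
                          ln (n%:R : R) <= eps * n%:R].
have H : forall n, exists G : set T, measurable G /\ G `<=` good_event X f q q' n /\
   (cond n -> ((1 - 3 / n%:R)%:E <= P G)%E).
  move=> n; case: (pselect (cond n)) => hc; last first.
    by exists set0; split => //; split => // ? ?.
  case: hc => n4 hfn hln.
  have m0 : 0 < n%:R :> R by rewrite ltr0n (leq_trans _ n4).
  have x0 : 0 < ln (n%:R : R) / n%:R.
    by rewrite divr_gt0 // (lt_le_trans ltr01) // ln_ge1.
  set tau := powR (ln (n%:R : R) / n%:R) (d%:R)^-1.
  have t0 : 0 < tau by apply: powR_gt0.
  have htd : tau ^+ d = ln (n%:R : R) / n%:R.
    rewrite /tau -powR_mulrn ?powR_ge0 // -powRrM mulVf ?powRr1 ?ltW //.
    by rewrite pnatr_eq0 -lt0n.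
  have h16 : 16 * tau <= delta.
    have hx : tau ^+ d <= eps by rewrite htd ler_pdivrMr // mulrC.
    rewrite leNgt; apply/negP => h0.
    have h : delta / 16 < tau by lra.
    have h1 : 0 <= delta / 16 by lra.
    have := ltrXn2r d h1 h; rewrite -lt0n d1 => H.
    by move: (lt_le_trans H hx); rewrite ltxx.
  have hs4 : 4 * d%:R * (2 * tau) <= Defs.radius d f n * delta.
    rewrite /Defs.radius -/tau.
    move: hfn; rewrite ler_pdivrMr // => hfn.
    have e1 : 4 * d%:R * (2 * tau) = (8 * d%:R) * tau by ring.
    have e2 : f n * tau * delta = (f n * delta) * tau by ring.
    by rewrite e1 e2 ler_pM2r.
  have s0 : 0 < 2 * tau by lra.
  have hs8 : 8 * (2 * tau) <= delta by lra.
  have [G [mG [sG PG]]] := main_n d2 hX hind hq hq' del0 hpd s0 hs8 hs4.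
  exists G; split => //; split => // _.
  apply: le_trans PG; rewrite lee_fin lerD2l lerN2.
  exact: bound_n d2 n4 del0 del1 t0 htd h16.
case: (choice H) => A hA.
exists A; split; first by move=> n; have [? [? _]] := hA n.
have fin : forall n, P (A n) \is a fin_num.
  move=> n; have [mA _] := hA n.
  by rewrite ge0_fin_numE ?measure_ge0 // (le_lt_trans (probability_le1 _ mA)) ?ltry.
apply: cvg_EFin; first by apply: nearW => n; exact: fin n.
apply/cvgrPdist_le => e e0.
move/cvgryPge: hf => hf.
have [N1 _ HN1] := hf (8 * d%:R / delta).
have [N2 HN2] := ln_small eps0.
exists (maxn (maxn 4 N1) (maxn N2 (Num.truncn (3 / e)).+1)) => // n /= hn.
move: hn; rewrite !geq_max => /andP [/andP [n4 nN1] /andP [nN2 nN3]].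
have n0 : 0 < n%:R :> R by rewrite ltr0n (leq_trans _ n4).
have [mA [_ hP]] := hA n.
have hp := hP (And3 n4 (HN1 n nN1) (HN2 n nN2)).
have le1 := probability_le1 P mA.
rewrite -(fineK (fin n)) in hp le1.
move: hp le1; rewrite !lee_fin => hp le1.
have h3 : 3 / e < n%:R by apply: lt_le_trans (truncnS_gt _) _; rewrite ler_nat.
move: h3; rewrite ltr_pdivrMr // => h3.
have h3' : 3 / n%:R <= e by rewrite ler_pdivrMr // mulrC ltW.
rewrite ger0_norm ?subr_ge0 //; lra.
Qed.
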